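(* There exist a finite structure $\mathcal{A}$ and an $\omega$-categorical structure $\mathcal{B}$ over the same finite relational signature such that $\Pi_2\text{-}\mathrm{CSP}(\mathcal{A}) \subseteq \Pi_2\text{-}\mathrm{CSP}(\mathcal{B})$ but $\mathrm{QCSP}(\mathcal{A}) \not\subseteq \mathrm{QCSP}(\mathcal{B})$.
   Context: A countably infinite structure is $\omega$-categorical if it is, up to isomorphism, the unique countable model of its first-order theory. A positive Horn (pH) sentence is a first-order sentence built from atoms (relational and equalities) using only $\exists,\forall,\wedge$. $\mathrm{QCSP}(\mathcal{A})$ is the set of pH sentences true in $\mathcal{A}$, and $\Pi_2\text{-}\mathrm{CSP}(\mathcal{A})$ is the set of pH sentences of the form $\forall\bar x\exists\bar y\,P$ ($P$ a conjunction of atoms) true in $\mathcal{A}$. *)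

(* Defs.v *)
From Stdlib Require List.
From mathcomp Require Import all_boot.
Set Implicit Arguments. Unset Strict Implicit. Unset Printing Implicit Defensive.

Record signature := Signature { sym : finType; arity : sym -> nat }.

Record structure (S : signature) := Structure {
  dom :> Type;
  interp : forall r : sym S, ('I_(arity r) -> dom) -> Prop;
  dom_inhabited : inhabited dom }.

Inductive formula (S : signature) : Type :=
| FRel (r : sym S) (args : 'I_(arity r) -> nat)
| FEq (x y : nat)
| FFalse
| FNot (f : formula S)
| FAnd (f g : formula S)
| FOr (f g : formula S)
| FImp (f g : formula S)
| FEx (x : nat) (f : formula S)
| FAll (x : nat) (f : formula S).

Definition upd (A : Type) (v : nat -> A) (x : nat) (a : A) : nat -> A :=
  fun y => if y == x then a else v y.

Fixpoint sat (S : signature) (A : structure S) (v : nat -> A) (f : formula S)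
  : Prop :=
  match f with
  | FRel r args => @interp S A r (fun i => v (args i))
  | FEq x y => v x = v y
  | FFalse => False
  | FNot g => ~ sat v g
  | FAnd g h => sat v g /\ sat v h
  | FOr g h => sat v g \/ sat v h
  | FImp g h => sat v g -> sat v h
  | FEx x g => exists a : A, sat (upd v x a) g
  | FAll x g => forall a : A, sat (upd v x a) g
  end.

Fixpoint free (S : signature) (x : nat) (f : formula S) : Prop :=
  match f with
  | FRel r args => exists i, args i = x
  | FEq y z => x = y \/ x = z
  | FFalse => False
  | FNot g => free x g
  | FAnd g h | FOr g h | FImp g h => free x g \/ free x h
  | FEx y g | FAll y g => x <> y /\ free x g
  end.

Definition sentence (S : signature) (f : formula S) : Prop := forall x, ~ free x f.

Definition holds (S : signature) (A : structure S) (f : formula S) : Prop :=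
  forall v : nat -> A, sat v f.

Inductive pH (S : signature) : formula S -> Prop :=
| pH_rel r args : pH (@FRel S r args)
| pH_eq x y : pH (FEq S x y)
| pH_and f g : pH f -> pH g -> pH (FAnd f g)
| pH_ex x f : pH f -> pH (FEx x f)
| pH_all x f : pH f -> pH (FAll x f).

Inductive atom_conj (S : signature) : formula S -> Prop :=
| ac_rel r args : atom_conj (@FRel S r args)
| ac_eq x y : atom_conj (FEq S x y)
| ac_and f g : atom_conj f -> atom_conj g -> atom_conj (FAnd f g).

Inductive ex_block (S : signature) : formula S -> Prop :=
| eb_base f : atom_conj f -> ex_block f
| eb_ex x f : ex_block f -> ex_block (FEx x f).

Inductive pi2_form (S : signature) : formula S -> Prop :=
| p2_base f : ex_block f -> pi2_form f
| p2_all x f : pi2_form f -> pi2_form (FAll x f).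

Definition QCSP (S : signature) (A : structure S) (f : formula S) : Prop :=
  pH f /\ sentence f /\ holds A f.

Definition Pi2CSP (S : signature) (A : structure S) (f : formula S) : Prop :=
  pi2_form f /\ sentence f /\ holds A f.

Definition finite_type (T : Type) : Prop := exists l : seq T, forall x, List.In x l.
Definition countable_type (T : Type) : Prop := exists f : T -> nat, injective f.
Definition countably_infinite (T : Type) : Prop := countable_type T /\ ~ finite_type T.

Definition isomorphic (S : signature) (A B : structure S) : Prop :=
  exists (f : A -> B) (g : B -> A), cancel f g /\ cancel g f /\
    forall (r : sym S) (a : 'I_(arity r) -> A),
      @interp S A r a <-> @interp S B r (fun i => f (a i)).

Definition models_theory_of (S : signature) (B M : structure S) : Prop :=
  forall f : formula S, sentence f -> holds B f -> holds M f.

Definition omega_categorical (S : signature) (B : structure S) : Prop :=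
  countably_infinite B /\
  forall M : structure S, countable_type M -> models_theory_of B M -> isomorphic M B.

(* Main.v *)
Require Import Defs.
From mathcomp Require Import all_boot zify.
From Stdlib Require Import ClassicalEpsilon FunctionalExtensionality IndefiniteDescription Lia Classical.
Set Implicit Arguments. Unset Strict Implicit. Unset Printing Implicit Defensive.

Definition Sig : signature := @Signature unit (fun _ => 2).
Definition i0 : 'I_2 := @Ordinal 2 0 isT.
Definition i1 : 'I_2 := @Ordinal 2 1 isT.
Definition args2 (a b : nat) : 'I_2 -> nat := fun k => if val k == 0 then a else b.
Definition Rf (a b : nat) : formula Sig := @FRel Sig tt (args2 a b).

Inductive three := TA | TA' | TC.
Definition RA (x y : three) : Prop := ~ ((x = TA /\ y = TA') \/ (x = TA' /\ y = TA)).
Definition Astr : structure Sig := @Structure Sig three (fun _ t => RA (t i0) (t i1)) (inhabits TC).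
Definition RB (p q : nat * bool) : Prop := p.1 <> q.1 \/ p.2 = q.2.
Definition Bstr : structure Sig :=
  @Structure Sig (nat * bool) (fun _ t => RB (t i0) (t i1)) (inhabits (0, true)).

Lemma free_Rf x a b : free x (Rf a b) -> x = a \/ x = b.
Proof. move=> /= [[[|[|k]] Hk]] //= <-; [left|right]; done. Qed.

Definition sepF : formula Sig := FEx 0 (FAll 1 (Rf 1 0)).

Lemma sep_A : QCSP Astr sepF.
Proof.
rewrite /sepF; split; first by apply: pH_ex; apply: pH_all; apply: pH_rel.
split.
  move=> x /= [Hx [Hx2 /free_Rf [|]]]; lia.
move=> v /=; exists TC => a /=; rewrite /RA /upd /=; by move=> [[_ ?]|[_ ?]].
Qed.

Lemma sep_B : ~ QCSP Bstr sepF.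
Proof.
move=> [_ [_ H]]; have := H (fun _ => (0, true)).
move=> /= [[k b]] /(_ (k, ~~ b)); rewrite /RB /upd /=.
by case: b => [] [].
Qed.

Lemma finA : finite_type Astr.
Proof. exists [:: TA; TA'; TC]; case; simpl; tauto. Qed.

Lemma sat_ext (S : signature) (M : structure S) (f : formula S) (v w : nat -> M) :
  (forall x, free x f -> v x = w x) -> (sat v f <-> sat w f).
Proof.
elim: f v w => /=.
- move=> r args v w H.
  have -> : (fun i => v (args i)) = (fun i => w (args i)).
    by apply: functional_extensionality => i; apply: H; exists i.
  done.
- move=> x y v w H; rewrite (H x) ?(H y); tauto.
- tauto.
- move=> f IH v w H; have := IH v w H; tauto.
- move=> f IHf g IHg v w H; have := IHf v w (fun x h => H x (or_introl h));
  have := IHg v w (fun x h => H x (or_intror h)); tauto.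
- move=> f IHf g IHg v w H; have := IHf v w (fun x h => H x (or_introl h));
  have := IHg v w (fun x h => H x (or_intror h)); tauto.
- move=> f IHf g IHg v w H; have := IHf v w (fun x h => H x (or_introl h));
  have := IHg v w (fun x h => H x (or_intror h)); tauto.
- move=> y f IH v w H.
  have E : forall a x, free x f -> upd v y a x = upd w y a x.
    by move=> a x Hx; rewrite /upd; case: eqP => // Hxy; apply: H; split.
  split=> [[a Ha]|[a Ha]]; exists a; [exact/(IH _ _ (E a))|exact/(IH _ _ (E a))].
- move=> y f IH v w H.
  have E : forall a x, free x f -> upd v y a x = upd w y a x.
    by move=> a x Hx; rewrite /upd; case: eqP => // Hxy; apply: H; split.
  split=> Ha a; [exact/(IH _ _ (E a))|exact/(IH _ _ (E a))].
Qed.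

Lemma free_bound (S : signature) (f : formula S) (g : nat -> nat) :
  exists N, forall x, free x f -> g x < N.
Proof.
elim: f => /=.
- move=> r args; exists (\max_(i < arity r) g (args i)).+1 => x [i <-].
  rewrite ltnS; exact: (@leq_bigmax _ (fun i => g (args i)) i).
- move=> x y; exists (maxn (g x) (g y)).+1 => z [] ->; rewrite ltnS ?leq_maxl ?leq_maxr //.
- by exists 0.
- by [].
- move=> f [N1 H1] h [N2 H2]; exists (maxn N1 N2) => x [/H1|/H2] H;
  rewrite leq_max H ?orbT //.
- move=> f [N1 H1] h [N2 H2]; exists (maxn N1 N2) => x [/H1|/H2] H;
  rewrite leq_max H ?orbT //.
- move=> f [N1 H1] h [N2 H2]; exists (maxn N1 N2) => x [/H1|/H2] H;
  rewrite leq_max H ?orbT //.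
- move=> y f [N H]; exists N => x [_ /H] //.
- move=> y f [N H]; exists N => x [_ /H] //.
Qed.

Definition notC (t : three) : bool := if t is TC then false else true.
Definition isA (t : three) : bool := if t is TA then true else false.

Definition sm (m : nat) (x : nat -> three) : nat * bool :=
  let j := find (fun k => notC (x k)) (iota 0 m) in
  if j < m then (j, isA (x j)) else (m, true).

Lemma find_iota_spec (P : pred nat) m :
  let j := find P (iota 0 m) in
  (j < m -> P j) /\ (forall i, i < j -> ~~ P i) /\ j <= m.
Proof.
move=> j; split; [|split].
- move=> Hj; have := @nth_find _ 0 P (iota 0 m).
  rewrite has_find size_iota nth_iota // => /(_ Hj) //.
- move=> i Hi; have Hm : j <= m by rewrite -(size_iota 0 m) find_size.
  have := @before_find _ 0 P (iota 0 m) i Hi.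
  by rewrite nth_iota ?(leq_trans Hi) // => ->.
- by rewrite -(size_iota 0 m) find_size.
Qed.

Lemma sm_hom m (x y : nat -> three) :
  (forall i, RA (x i) (y i)) -> RB (sm m x) (sm m y).
Proof.
move=> H; rewrite /sm.
have [Px [Bx Lx]] := find_iota_spec (fun k => notC (x k)) m.
have [Py [By Ly]] := find_iota_spec (fun k => notC (y k)) m.
set jx := find _ (iota 0 m) in Px Bx Lx *.
set jy := find _ (iota 0 m) in Py By Ly *.
case: ltnP => hx; case: ltnP => hy; rewrite /RB /=.
- case: (eqVneq jx jy) => [E|E]; last by left; apply/eqP.
  right; rewrite -E in Py *; have := H jx; move: (Px hx) (Py hx).
  rewrite /RA; case: (x jx); case: (y jx) => //= _ _ []; tauto.
- by left => E; rewrite E ltnn in hx.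
- by left => E; rewrite -E ltnn in hy.
- by right.
Qed.

Definition enc (p : nat * bool) : nat -> three :=
  fun i => if i == p.1 then (if p.2 then TA else TA') else TC.

Lemma sm_enc m p : p.1 < m -> sm m (enc p) = p.
Proof.
move=> Hp; rewrite /sm.
have [Px [Bx Lx]] := find_iota_spec (fun k => notC (enc p k)) m.
set j := find _ (iota 0 m) in Px Bx Lx *.
have Ej : j = p.1.
  case: (ltngtP j p.1) => // H.
  - have := Px (ltn_trans H Hp); rewrite /enc; by case: eqP => // ->; rewrite ltnn in H.
  - by have := Bx _ H; rewrite /enc eqxx; case: p.2.
rewrite Ej Hp /enc eqxx; case: p Hp {j Px Bx Lx Ej} => a [] //.
Qed.

Lemma ac_tr (f : formula Sig) : ex_block f -> forall m (w : nat -> nat -> three),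
  (forall i, @sat Sig Astr (fun x => w x i) f) -> @sat Sig Bstr (fun x => sm m (w x)) f.
Proof.
move=> Ef; elim: Ef => {f}.
- move=> g Ag; elim: Ag => {g}.
  + move=> r args m w H /=; apply: sm_hom => i; exact: H.
  + move=> x y m w H /=; congr sm; apply: functional_extensionality; exact: H.
  + move=> g1 g2 _ IHf _ IHg m w H; split; [apply: IHf|apply: IHg] => i; by case: (H i).
- move=> x f _ IH m w H.
  have [h Hh] := functional_choice _ H.
  exists (sm m h).
  have := IH m (upd w x h).
  have -> : (fun y => sm m (upd w x h y)) = upd (fun y => sm m (w y)) x (sm m h).
    by apply: functional_extensionality => y; rewrite /upd; case: (y == x).
  apply => i.
  have -> : (fun y => upd w x h y i) = upd (fun y => w y i) x (h i).
    by apply: functional_extensionality => y; rewrite /upd; case: (y == x).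
  exact: Hh.
Qed.

Lemma eb_tr (f : formula Sig) : ex_block f -> holds Astr f -> holds Bstr f.
Proof.
move=> Ef HA v.
have [N HN] := free_bound f (fun x => (v x).1).
have := @ac_tr _ Ef N (fun x => enc (v x)) (fun i => HA _).
have E : forall x, free x f -> sm N (enc (v x)) = v x by move=> x /HN; exact: sm_enc.
by move/(@sat_ext Sig Bstr f (fun x => sm N (enc (v x))) v E).
Qed.

Lemma p2_tr (f : formula Sig) : pi2_form f -> holds Astr f -> holds Bstr f.
Proof.
move=> Pf; elim: Pf => {f}; first exact: eb_tr.
move=> x f _ IH HA v a; apply: IH => w.
have := HA w (w x).
have -> : upd w x (w x) = w.
  by apply: functional_extensionality => y; rewrite /upd; case: eqP => // ->.
done.
Qed.

Definition pb (P : Prop) : bool := if excluded_middle_informative P then true else false.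
Lemma pbP (P : Prop) : pb P = true <-> P.
Proof. rewrite /pb; case: excluded_middle_informative => //; split=> //. Qed.

Lemma leq_sumn (L : seq nat) x : x \in L -> x <= sumn L.
Proof.
elim: L => //= a L IH; rewrite in_cons => /orP [/eqP ->|/IH H]; first exact: leq_addr.
exact: (leq_trans H (leq_addl _ _)).
Qed.

Definition isrep T (p : T -> T) (f0 : T -> nat) x : bool := f0 x < f0 (p x).
Definition rep T (p : T -> T) (f0 : T -> nat) x : T := if isrep p f0 x then x else p x.
Definition Sb T (p : T -> T) (f0 : T -> nat) (n : nat) : bool :=
  pb (exists x, isrep p f0 x /\ f0 x = n).
Definition cnt T (p : T -> T) (f0 : T -> nat) n := count (Sb p f0) (iota 0 n).
Definition idx T (p : T -> T) (f0 : T -> nat) x := cnt p f0 (f0 (rep p f0 x)).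

Lemma cntS T (p : T -> T) f0 n : cnt p f0 n.+1 = cnt p f0 n + Sb p f0 n.
Proof. by rewrite /cnt -addn1 iotaD count_cat /= addn0. Qed.

Lemma cnt_mono T (p : T -> T) f0 m n : m <= n -> cnt p f0 m <= cnt p f0 n.
Proof.
move=> H; rewrite -(subnKC H) /cnt iotaD count_cat; exact: leq_addr.
Qed.

Lemma iso_core T (p : T -> T) (f0 : T -> nat) :
  (forall x, p (p x) = x) -> (forall x, p x <> x) -> injective f0 ->
  (forall n, exists u : nat -> T, forall i j, i < n -> j < n -> i <> j ->
       u i <> u j /\ u j <> p (u i)) ->
  exists (F : T -> nat * bool) (G : nat * bool -> T), cancel F G /\ cancel G F /\
    forall x y, y <> p x <-> RB (F x) (F y).
Proof.
move=> inv nfix inj inf.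
have fne : forall x, f0 x <> f0 (p x) by move=> x /inj H; apply: (nfix x); rewrite -H.
have isrepP : forall x, isrep p f0 (p x) = ~~ isrep p f0 x.
  move=> x; rewrite /isrep inv; have := fne x; case: ltngtP => //; lia.
have rep_rep : forall x, isrep p f0 (rep p f0 x).
  by move=> x; rewrite /rep; case E: (isrep p f0 x); rewrite ?isrepP E.
have rep_p : forall x, rep p f0 (p x) = rep p f0 x.
  by move=> x; rewrite /rep isrepP; case: (isrep p f0 x) => //=; rewrite inv.
have rep_id : forall x, isrep p f0 x -> rep p f0 x = x by move=> x; rewrite /rep => ->.
have rep_eq : forall x y, rep p f0 x = rep p f0 y -> y = x \/ y = p x.
  move=> x y; rewrite /rep; case: (isrep p f0 x); case: (isrep p f0 y) => E;
  first [by left; rewrite E | by right; rewrite E inv | by right; rewrite -E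
        | by left; rewrite -(inv y) -E inv].
have Sb_rep : forall r, isrep p f0 r -> Sb p f0 (f0 r).
  by move=> r Hr; apply/pbP; exists r.
have cnt_lt : forall r r', isrep p f0 r -> f0 r < f0 r' -> cnt p f0 (f0 r) < cnt p f0 (f0 r').
  move=> r r' Hr H; apply: (@leq_trans (cnt p f0 (f0 r).+1)); last exact: cnt_mono.
  by rewrite cntS Sb_rep // addn1.
have idx_inj : forall x y, idx p f0 x = idx p f0 y -> rep p f0 x = rep p f0 y.
  move=> x y E; apply: inj; rewrite /idx in E.
  case: (ltngtP (f0 (rep p f0 x)) (f0 (rep p f0 y))) => // H.
  - by have := cnt_lt _ _ (rep_rep x) H; rewrite E ltnn.
  - by have := cnt_lt _ _ (rep_rep y) H; rewrite E ltnn.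
have unb : forall n, exists N, n <= cnt p f0 N.
  move=> n; have [u Hu] := inf n.
  pose L := map (fun i => f0 (rep p f0 (u i))) (iota 0 n).
  exists (sumn L).+1.
  have uL : uniq L.
    rewrite map_inj_in_uniq ?iota_uniq // => i j; rewrite !mem_iota /= !add0n => Hi Hj /inj.
    move=> /rep_eq [E|E]; have [->//|/eqP Nij] := eqVneq i j;
      have [A B] := Hu i j Hi Hj Nij; first [by case: A; rewrite E | by case: B].
  have -> : n = size L by rewrite size_map size_iota.
  rewrite /cnt -size_filter; apply: uniq_leq_size => // z Hz.
  rewrite mem_filter mem_iota /= add0n ltnS leq_sumn // andbT.
  move: Hz => /mapP [i _ ->]; exact: Sb_rep.
have ex_k : forall k N, k < cnt p f0 N -> exists m, cnt p f0 m = k /\ Sb p f0 m.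
  move=> k; elim=> [|N IH]; first by rewrite /cnt.
  rewrite cntS; case: (ltnP k (cnt p f0 N)) => [/IH //|H1 H2].
  exists N; case: (Sb p f0 N) H2 => /= H2; [split => //; lia | exfalso; lia].
have rk_ex : forall k, exists r, isrep p f0 r /\ idx p f0 r = k.
  move=> k; have [N HN] := unb k.+1; have [m [Hm /pbP [r [Hr Er]]]] := ex_k k N HN.
  by exists r; split => //; rewrite /idx rep_id // Er.
have [rk Hrk] := functional_choice _ rk_ex.
exists (fun x => (idx p f0 x, isrep p f0 x)).
exists (fun kb => if kb.2 then rk kb.1 else p (rk kb.1)).
split; [|split].
- move=> x /=; have [H1 H2] := Hrk (idx p f0 x).
  have E : rk (idx p f0 x) = rep p f0 x.
    by rewrite -(rep_id _ H1); apply: idx_inj.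
  rewrite E /rep; case: (isrep p f0 x) => //.
- case=> k b /=; have [H1 H2] := Hrk k.
  case: b => /=.
  + by rewrite H1 H2.
  + rewrite isrepP H1 /idx rep_p; congr (_, _); exact: H2.
- move=> x y; rewrite /RB /=; split.
  + move=> Hy; case: (eqVneq (idx p f0 x) (idx p f0 y)) => [E|E]; last by left; apply/eqP.
    right; case: (rep_eq _ _ (idx_inj _ _ E)) => E2; [by rewrite E2 | by case: Hy].
  + move=> [H|H] Ey; subst y.
    * by apply: H; rewrite /idx rep_p.
    * by move: H; rewrite isrepP; case: (isrep p f0 x).
Qed.

Definition RM (M : structure Sig) (x y : M) : Prop :=
  @interp Sig M tt (fun i : 'I_2 => if val i == 0 then x else y).

Lemma satRf (M : structure Sig) (v : nat -> M) a b : sat v (Rf a b) <-> RM (v a) (v b).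
Proof.
rewrite /= /RM.
have -> : (fun i : 'I_2 => v (args2 a b i)) = (fun i : 'I_2 => if val i == 0 then v a else v b).
  by apply: functional_extensionality => i; rewrite /args2; case: (val i == 0).
done.
Qed.

Ltac killfree := let x := fresh "x" in let H := fresh "H" in move=> x H; simpl in H; rewrite /args2 /= in H;
  repeat match goal with
  | H : _ /\ _ |- _ => destruct H
  | H : _ \/ _ |- _ => destruct H
  | H : ex _ |- _ => let i := fresh "i" in let Hi := fresh "Hi" in
       destruct H as [[[|[|i]] Hi] H]; simpl in H
  end; lia.

Definition refF : formula Sig := FAll 0 (Rf 0 0).
Definition symF : formula Sig := FAll 0 (FAll 1 (FImp (Rf 0 1) (Rf 1 0))).
Definition parF : formula Sig := FAll 0 (FEx 1 (FAnd (FNot (FEq Sig 1 0)) (FNot (Rf 0 1)))).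
Definition uniF : formula Sig :=
  FAll 0 (FAll 1 (FAll 2 (FImp (FNot (Rf 0 1)) (FImp (FNot (Rf 0 2)) (FEq Sig 1 2))))).

Lemma sent_ref : sentence refF. Proof. killfree. Qed.
Lemma sent_sym : sentence symF. Proof. killfree. Qed.
Lemma sent_par : sentence parF. Proof. killfree. Qed.
Lemma sent_uni : sentence uniF. Proof. killfree. Qed.

Lemma B_ref : holds Bstr refF. Proof. move=> v a /=; rewrite /RB; by right. Qed.
Lemma B_sym : holds Bstr symF.
Proof. move=> v a b /=; rewrite /RB /upd /=; case=> H; [left => E; apply: H|right]; by []. Qed.
Lemma B_par : holds Bstr parF.
Proof.
move=> v [k b] /=; exists (k, ~~ b); rewrite /RB /upd /=; split; first by case=> /eqP; case: b.
by case=> //; case: b.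
Qed.
Lemma B_uni : holds Bstr uniF.
Proof.
move=> v [k b] [k1 b1] [k2 b2]; rewrite /= /RB /upd /=.
case: (eqVneq k k1) => [<-|/eqP N1]; last by move=> H; exfalso; apply: H; left.
case: (eqVneq k k2) => [<-|/eqP N2]; last by move=> _ H; exfalso; apply: H; left.
move=> H1 H2; congr (_, _); case: b b1 b2 H1 H2 => [] [] [] H1 H2 //; exfalso; (apply: H1 + apply: H2); by right.
Qed.

Definition TT : formula Sig := FNot (FFalse Sig).
Definition pairF (i j : nat) : formula Sig :=
  if i == j then TT else FAnd (FNot (FEq Sig i j)) (Rf i j).
Definition andfold (P : nat -> formula Sig) (l : seq nat) : formula Sig :=
  foldr (fun j a => FAnd (P j) a) TT l.
Definition phiF (n : nat) : formula Sig :=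
  foldr (@FEx Sig) (andfold (fun i => andfold (pairF i) (iota 0 n)) (iota 0 n)) (iota 0 n).

Lemma sat_andfold (M : structure Sig) (v : nat -> M) P l :
  sat v (andfold P l) <-> forall j, j \in l -> sat v (P j).
Proof.
elim: l => [|a l IH] /=; first by split=> // _ [].
rewrite IH; split.
- by move=> [Ha Hl] j; rewrite in_cons => /orP [/eqP ->|/Hl].
- by move=> H; split; [apply: H; rewrite mem_head | move=> j Hj; apply: H; rewrite in_cons Hj orbT].
Qed.

Lemma free_andfold x P l : free x (andfold P l) -> exists j, j \in l /\ free x (P j).
Proof.
elim: l => [|a l IH] /=; first by [].
move=> [H|/IH [j [Hj Hf]]]; first by exists a; rewrite mem_head.
by exists j; rewrite in_cons Hj orbT.
Qed.

Lemma sat_exfold (M : structure Sig) (v : nat -> M) f l :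
  sat v (foldr (@FEx Sig) f l) <-> exists u : nat -> M, (forall x, x \notin l -> u x = v x) /\ sat u f.
Proof.
elim: l v => [|a l IH] v /=.
  split; [by move=> H; exists v | move=> [u [Hu H]]].
  by have -> : v = u by apply: functional_extensionality => x; rewrite Hu.
split.
- move=> [b /IH [u [Hu H]]]; exists u; split => // x; rewrite in_cons negb_or => /andP [Na Nl].
  by rewrite Hu // /upd (negbTE Na).
- move=> [u [Hu H]]; exists (u a); apply/IH; exists u; split => // x Nl.
  rewrite /upd; case: eqP => [->//|/eqP Na]; apply: Hu; by rewrite in_cons negb_or Na.
Qed.

Lemma free_exfold x f l : free x (foldr (@FEx Sig) f l) -> x \notin l /\ free x f.
Proof.
elim: l => [|a l IH] //= [Na /IH [Nl Hf]]; split => //.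
by rewrite in_cons negb_or Nl andbT; apply/eqP.
Qed.

Lemma sent_phi n : sentence (phiF n).
Proof.
move=> x /free_exfold [Nx /free_andfold [i [Hi /free_andfold [j [Hj Hf]]]]].
have Hx : x = i \/ x = j.
  move: Hf; rewrite /pairF; case: eqP => [_ []|_ /=].
  case=> [[]|[[[|[|k]] Hk]]]; try by auto.
case: Hx => E; subst x; by rewrite ?Hi ?Hj in Nx.
Qed.

Lemma B_phi n : holds Bstr (phiF n).
Proof.
move=> v; apply/sat_exfold.
exists (fun x => if x < n then (x, true) else v x); split.
  by move=> x; rewrite mem_iota /= add0n => /negbTE ->.
apply/sat_andfold => i Hi; apply/sat_andfold => j Hj.
move: Hi Hj; rewrite !mem_iota /= !add0n => Hi Hj.
rewrite /pairF; case: eqP => [_|/eqP Nij] /=; first by [].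
rewrite Hi Hj /RB /=; split; first by case=> /eqP; rewrite (negbTE Nij).
by left; apply/eqP.
Qed.

Lemma In_le (l : seq (nat * bool)) q : List.In q l -> q.1 <= foldr (fun q a => maxn q.1 a) 0 l.
Proof.
elim: l => [|a l IH] //= [->|/IH H]; first exact: leq_maxl.
exact: (leq_trans H (leq_maxr _ _)).
Qed.

Lemma B_ci : countably_infinite Bstr.
Proof.
split.
  exists (fun kb : nat * bool => kb.2 + kb.1.*2) => [[k b] [k' b']] /= E.
  have Eo : b = b' by have := congr1 odd E; rewrite !oddD !odd_double !addbF !oddb.
  have Eh : k = k' by have := congr1 half E; rewrite !half_bit_double.
  by rewrite Eo Eh.
move=> [l Hl]; have := In_le (Hl ((foldr (fun q a => maxn q.1 a) 0 l).+1, true)).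
by rewrite /= ltnn.
Qed.

Lemma ord2_eta (T : Type) (a : 'I_2 -> T) : a = (fun i : 'I_2 => if val i == 0 then a i0 else a i1).
Proof.
apply: functional_extensionality => -[[|[|k]] Hk] //=.
- by congr a; apply: val_inj.
- by congr a; apply: val_inj.
Qed.

Lemma B_omega : omega_categorical Bstr.
Proof.
split; first exact: B_ci.
move=> M [f0 inj] HM.
case: (dom_inhabited M) => m0.
have mt : forall f, sentence f -> holds Bstr f -> holds M f by move=> f Hs Hb; exact: HM.
have refl : forall x : M, RM x x.
  by move=> x; have := mt _ sent_ref B_ref (fun _ => m0) x; move/satRf.
have sym : forall x y : M, RM x y -> RM y x.
  move=> x y; have := mt _ sent_sym B_sym (fun _ => m0) x y.
  by rewrite /= -/(Rf 0 1) -/(Rf 1 0) => /(_ _) H /(satRf (upd (upd (fun _ => m0) 0 x) 1 y) 0 1) /H /satRf.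
have par : forall x : M, exists y, y <> x /\ ~ RM x y.
  move=> x; have [y [H1 H2]] := mt _ sent_par B_par (fun _ => m0) x.
  exists y; split => // H; apply: H2; exact/(satRf (upd (upd (fun _ => m0) 0 x) 1 y) 0 1).
have uni : forall x y z : M, ~ RM x y -> ~ RM x z -> y = z.
  move=> x y z Hy Hz; have := mt _ sent_uni B_uni (fun _ => m0) x y z; apply => /=.
    by move/(satRf (upd (upd (upd (fun _ => m0) 0 x) 1 y) 2 z) 0 1).
  by move/(satRf (upd (upd (upd (fun _ => m0) 0 x) 1 y) 2 z) 0 2).
have [p Hp] := functional_choice _ par.
have nfix : forall x, p x <> x by move=> x; case: (Hp x).
have nR : forall x, ~ RM x (p x) by move=> x; case: (Hp x).
have inv : forall x, p (p x) = x.
  move=> x; apply: (uni (p x)); first exact: nR.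
  by move/sym; apply: nR.
have Rchar : forall x y, RM x y <-> y <> p x.
  move=> x y; split; first by move=> H E; apply: (nR x); rewrite -E.
  move=> H; case: (classic (RM x y)) => // N; case: H; exact: (uni x).
have inf : forall n, exists u : nat -> M, forall i j, i < n -> j < n -> i <> j ->
       u i <> u j /\ u j <> p (u i).
  move=> n; have /sat_exfold [u [_ Hu]] := mt _ (@sent_phi n) (@B_phi n) (fun _ => m0).
  exists u => i j Hi Hj Nij.
  move/sat_andfold: Hu => /(_ i); rewrite mem_iota /= add0n => /(_ Hi).
  move/sat_andfold => /(_ j); rewrite mem_iota /= add0n => /(_ Hj).
  rewrite /pairF; case: eqP => // _ [H1 /satRf /Rchar H2]; split => //.
have [F [G [FG [GF FR]]]] := iso_core inv nfix inj inf.
exists F, G; split => //; split => //.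
case=> a; rewrite [a]ord2_eta /=.
rewrite -/(RM (a i0) (a i1)) Rchar; exact: FR.
Qed.

Theorem mainTheorem3 :
  exists (S : signature) (A B : structure S),
    finite_type A /\ omega_categorical B /\
    (forall f : formula S, Pi2CSP A f -> Pi2CSP B f) /\
    ~ (forall f : formula S, QCSP A f -> QCSP B f).
Proof.
exists Sig, Astr, Bstr; split; first exact: finA.
split; first exact: B_omega.
split.
  move=> f [P [Sf H]]; split => //; split => //; exact: p2_tr.
by move=> H; apply: sep_B; apply: H; exact: sep_A.
Qed.
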